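(* Let $\mathbb{B}=ro(Add(\omega,1))$ (in $V$). Let $\dot{x}\in V^{\mathbb{B}}$ be such that $\Vdash\dot{x}\subseteq\check{V}\wedge\dot{x}\notin\check{V}$ and every element of $\dot{x}$ is of the form $\langle\check{n},c\rangle$ with $n\in V$ and $c\in\mathbb{B}$. Then for all $b\in\mathbb{B}$ there is some $\mathcal{A}\subseteq Aut(\mathbb{B})^{V}$ with $|\mathcal{A}|>\omega$ such that for all $\sigma\neq\tau$ in $\mathcal{A}$, $\sigma(b)=b=\tau(b)$ and $b\Vdash\sigma\dot{x}\neq\tau\dot{x}$.
   Context: $\mathbb{B}$ is the complete Boolean algebra of regular open subsets of Cohen forcing $Add(\omega,1)$. For $\sigma\in Aut(\mathbb{B})$ and a $\mathbb{B}$-name $\dot x$, $\sigma\dot x$ is the name obtained by applying $\sigma$ recursively. *)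

(* Defs.v *)
From mathcomp Require Import all_boot.
From mathcomp Require Import finmap.
Set Implicit Arguments. Unset Strict Implicit. Unset Printing Implicit Defensive.
Local Open Scope fmap_scope.

Definition cond := {fmap nat -> bool}.

(* q <= p  (q is stronger than / extends p) *)
Definition cle (q p : cond) : Prop :=
  forall (k : nat) (v : bool), p.[? k] = Some v -> q.[? k] = Some v.

Lemma cle_refl p : cle p p. Proof. by move=> k v. Qed.
Lemma cle_trans r q p : cle r q -> cle q p -> cle r p.
Proof. by move=> H1 H2 k v /H2 /H1. Qed.

(* regular-open interior of the closure: int(cl X) in the poset topology *)
Definition reg (X : cond -> Prop) : cond -> Prop :=
  fun p => forall q, cle q p -> exists r, cle r q /\ X r.

Definition regular_open (U : cond -> Prop) : Prop :=
  forall p, U p <-> reg U p.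

Lemma reg_regular X : regular_open (reg X).
Proof.
move=> p; split.
- move=> Hp q Hqp; exists q; split; first exact: cle_refl.
  move=> q' Hq'; exact: (Hp q' (cle_trans Hq' Hqp)).
- move=> H q Hqp; have [r [Hrq Hr]] := H q Hqp.
  have [r' [Hr'r Hr']] := Hr r (@cle_refl r).
  by exists r'; split => //; exact: cle_trans Hr'r Hrq.
Qed.

Definition B := {U : cond -> Prop | regular_open U}.

Definition mkB (X : cond -> Prop) : B := exist _ (reg X) (reg_regular X).
Definition inB (b : B) (p : cond) : Prop := proj1_sig b p.

Definition leB (a b : B) : Prop := forall p, inB a p -> inB b p.
Definition botB : B := mkB (fun _ => False).
Definition topB : B := mkB (fun _ => True).
Definition meetB (a b : B) : B := mkB (fun p => inB a p /\ inB b p).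
Definition joinB (a b : B) : B := mkB (fun p => inB a p \/ inB b p).
Definition complB (a : B) : B := mkB (fun p => forall q, cle q p -> ~ inB a q).
Definition impB (a b : B) : B := joinB (complB a) b.
Definition supB (P : B -> Prop) : B := mkB (fun p => exists b, P b /\ inB b p).
Definition infB (P : B -> Prop) : B := mkB (fun p => forall b, P b -> inB b p).

Definition is_aut (s : B -> B) : Prop :=
  bijective s /\
  (forall a b, s (meetB a b) = meetB (s a) (s b)) /\
  (forall a, s (complB a) = complB (s a)).

(* ---------- ground model V (Aczel sets) and B-names ---------- *)
Inductive ZF : Type := zsup : forall Ix : Type, (Ix -> ZF) -> ZF.

(* a B-name: a family of pairs <name, boolean value> *)
Inductive name : Type := Name : forall Ix : Type, (Ix -> name) -> (Ix -> B) -> name.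

Fixpoint check (n : ZF) : name :=
  match n with @zsup Ix f => @Name Ix (fun i => check (f i)) (fun _ => topB) end.

Fixpoint beq (x y : name) {struct x} : B :=
  match x, y with
  | @Name Ix f a, @Name Jx g c =>
    meetB
      (infB (fun v => exists i : Ix, v = impB (a i)
               (supB (fun w => exists j : Jx, w = meetB (c j) (beq (f i) (g j))))))
      (infB (fun v => exists j : Jx, v = impB (c j)
               (supB (fun w => exists i : Ix, w = meetB (a i) (beq (f i) (g j))))))
  end.

Definition in_checkV (x : name) : B :=
  supB (fun w => exists n : ZF, w = beq x (check n)).

Definition sub_checkV (x : name) : B :=
  match x with
  | @Name Ix f a => infB (fun v => exists i : Ix, v = impB (a i) (in_checkV (f i)))
  end.

Definition check_pairs (x : name) : Prop :=
  match x with @Name Ix f a => forall i : Ix, exists n : ZF, f i = check n end.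

Fixpoint act (s : B -> B) (x : name) : name :=
  match x with @Name Ix f a => @Name Ix (fun i => act s (f i)) (fun i => s (a i)) end.

Definition forces (b phi : B) : Prop := leB b phi.

Definition uncountable {T : Type} (A : T -> Prop) : Prop :=
  ~ exists h : {t : T | A t} -> nat, injective h.

(* Main.v *)
Require Import Defs.
From mathcomp Require Import all_boot.
From mathcomp Require Import finmap.
From Stdlib Require Import Classical ClassicalEpsilon FunctionalExtensionality PropExtensionality ProofIrrelevance.
Set Implicit Arguments. Unset Strict Implicit. Unset Printing Implicit Defensive.
Local Open Scope fmap_scope.

Lemma reg_down X p q : reg X p -> cle q p -> reg X q.
Proof. by move=> H Hq r Hr; apply: H; exact: cle_trans Hr Hq. Qed.

Lemma inB_reg (u : B) p : reg (inB u) p <-> inB u p.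
Proof. by case: u => U HU; rewrite /inB /=; split => /HU. Qed.

Lemma inB_down (u : B) p q : inB u p -> cle q p -> inB u q.
Proof. move=> /inB_reg H Hq; apply/inB_reg; exact: reg_down H Hq. Qed.

Lemma reg_of_down (X : cond -> Prop) p :
  (forall p q, X p -> cle q p -> X q) -> X p -> reg X p.
Proof. by move=> HX Xp q Hq; exists q; split; [exact: cle_refl| exact: HX Xp Hq]. Qed.

Lemma reg_mono (X Y : cond -> Prop) p : (forall q, X q -> Y q) -> reg X p -> reg Y p.
Proof. by move=> HXY H q Hq; have [r [Hr Xr]] := H q Hq; exists r; split => //; exact: HXY. Qed.

Lemma inB_mkB X p : inB (mkB X) p <-> reg X p.
Proof. by []. Qed.

Lemma eqB (u v : B) : (forall p, inB u p <-> inB v p) -> u = v.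
Proof.
case: u v => [U HU] [V HV] /= H.
have E : U = V by apply: functional_extensionality => p; apply: propositional_extensionality; exact: H.
subst V; f_equal; exact: proof_irrelevance.
Qed.

Lemma inB_top p : inB topB p.
Proof. by move=> q Hq; exists q; split => //; exact: cle_refl. Qed.

Lemma inB_bot p : ~ inB botB p.
Proof. by move=> H; have [r [_ []]] := H p ((@cle_refl p)). Qed.

Lemma inB_meet u v p : inB (meetB u v) p <-> inB u p /\ inB v p.
Proof.
split.
- move=> H; split; apply/inB_reg => q Hq; have [r [Hr [Hu Hv]]] := H q Hq; by exists r.
- move=> [Hu Hv]; apply: reg_of_down => // p0 q0 [H1 H2] Hq; split; exact: inB_down Hq.
Qed.

Lemma inB_inf P p : inB (infB P) p <-> forall v, P v -> inB v p.
Proof.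
split.
- move=> H v Pv; apply/inB_reg => q Hq; have [r [Hr Hv]] := H q Hq; exists r; split => //; exact: Hv.
- move=> H; apply: reg_of_down => // p0 q0 H0 Hq v Pv; exact: inB_down (H0 v Pv) Hq.
Qed.

Lemma inB_sup P p : inB (supB P) p <-> reg (fun q => exists v, P v /\ inB v q) p.
Proof. by []. Qed.

Lemma inB_sup_intro P v p : P v -> inB v p -> inB (supB P) p.
Proof.
move=> Pv Hv; apply: reg_of_down; last by exists v.
by move=> p0 q0 [w [Pw Hw]] Hq; exists w; split => //; exact: inB_down Hw Hq.
Qed.

Lemma inB_compl u p : inB (complB u) p <-> forall q, cle q p -> ~ inB u q.
Proof.
split.
- move=> H q Hq Hu; have [r [Hr Hr']] := H q Hq; exact: (Hr' r ((@cle_refl r)) (inB_down Hu Hr)).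
- move=> H; apply: reg_of_down => // p0 q0 H0 Hq r Hr; apply: H0; exact: cle_trans Hr Hq.
Qed.

Lemma inB_imp u v p : inB (impB u v) p <-> forall q, cle q p -> inB u q -> inB v q.
Proof.
split.
- move=> H q Hq Hu; apply/inB_reg => q' Hq'.
  have [r [Hr [Hc|Hv]]] := H q' (cle_trans Hq' Hq).
  + by exfalso; move/inB_compl: Hc; apply => //; [exact: cle_refl| exact: inB_down Hu (cle_trans Hr Hq')].
  + by exists r.
- move=> H q Hq.
  case: (classic (exists r, cle r q /\ inB u r)) => [[r [Hr Hu]]|Hn].
  + exists r; split => //; right; apply: H Hu; exact: cle_trans Hr Hq.
  + exists q; split; first exact: cle_refl.
    left; apply/inB_compl => r Hr Hu; apply: Hn; by exists r.
Qed.

Fixpoint zeq (n m : ZF) {struct n} : Prop :=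
  match n, m with
  | @zsup I0 f, @zsup J g =>
    (forall i, exists j, zeq (f i) (g j)) /\ (forall j, exists i, zeq (f i) (g j))
  end.

Lemma zeq_refl n : zeq n n.
Proof. elim: n => I0 f IH /=; split => i; exists i; exact: IH. Qed.

Lemma zeq_sym n m : zeq n m -> zeq m n.
Proof.
elim: n m => I0 f IH [J g] /= [H1 H2]; split.
- move=> j; have [i Hi] := H2 j; exists i; exact: IH.
- move=> i; have [j Hj] := H1 i; exists j; exact: IH.
Qed.

Lemma zeq_trans n m k : zeq n m -> zeq m k -> zeq n k.
Proof.
elim: n m k => I0 f IH [J g] [K h] /= [H1 H2] [H3 H4]; split.
- move=> i; have [j Hj] := H1 i; have [l Hl] := H3 j; exists l; exact: IH Hj Hl.
- move=> l; have [j Hj] := H4 l; have [i Hi] := H2 j; exists i; exact: IH Hi Hj.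
Qed.

Lemma reg_const (C : Prop) p : reg (fun _ => C) p <-> C.
Proof.
split; first by move=> H; have [r [_ Hr]] := H p (@cle_refl p).
by move=> c q Hq; exists q; split => //; exact: cle_refl.
Qed.

Lemma beq_check n m p : inB (beq (check n) (check m)) p <-> zeq n m.
Proof.
elim: n m p => I0 f IH [J g] p; cbn [check beq zeq].
rewrite inB_meet !inB_inf.
have E1 : forall i, (forall q, cle q p -> inB topB q ->
   inB (supB (fun w => exists j, w = meetB topB (beq (check (f i)) (check (g j))))) q)
   <-> exists j, zeq (f i) (g j).
  move=> i; split.
  - move=> H; have := H p (@cle_refl p) (@inB_top p); rewrite inB_sup => H'.
    apply/(reg_const _ p); apply: reg_mono H' => q [w [[j ->] Hw]].
    by exists j; move: Hw; rewrite inB_meet => -[_ /IH].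
  - move=> [j Hj] q _ _; apply: (inB_sup_intro (v := meetB topB (beq (check (f i)) (check (g j))))).
      by exists j.
    by rewrite inB_meet; split; [exact: inB_top| apply/IH].
have E2 : forall j, (forall q, cle q p -> inB topB q ->
   inB (supB (fun w => exists i, w = meetB topB (beq (check (f i)) (check (g j))))) q)
   <-> exists i, zeq (f i) (g j).
  move=> j; split.
  - move=> H; have := H p (@cle_refl p) (@inB_top p); rewrite inB_sup => H'.
    apply/(reg_const _ p); apply: reg_mono H' => q [w [[i ->] Hw]].
    by exists i; move: Hw; rewrite inB_meet => -[_ /IH].
  - move=> [i Hi] q _ _; apply: (inB_sup_intro (v := meetB topB (beq (check (f i)) (check (g j))))).
      by exists i.
    by rewrite inB_meet; split; [exact: inB_top| apply/IH].
split.
- move=> [H1 H2]; split.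
  + move=> i; apply/E1 => q Hq Ht.
    have := H1 _ (ex_intro _ i erefl); rewrite inB_imp => H; exact: H.
  + move=> j; apply/E2 => q Hq Ht.
    have := H2 _ (ex_intro _ j erefl); rewrite inB_imp => H; exact: H.
- move=> [H1 H2]; split.
  + move=> v [i ->]; rewrite inB_imp; exact/E1.
  + move=> v [j ->]; rewrite inB_imp; exact/E2.
Qed.

Lemma act_check s n : s topB = topB -> act s (check n) = check n.
Proof.
move=> Hs; elim: n => I0 f IH /=.
have -> : (fun i => act s (check (f i))) = (fun i => check (f i)).
  by apply: functional_extensionality => i; exact: IH.
by rewrite Hs.
Qed.

Definition good_pi (Dom : cond -> Prop) (pi : cond -> cond) : Prop :=
  [/\ (forall q, exists r, cle r q /\ Dom r),
      (forall q, Dom q -> Dom (pi q)),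
      (forall q, Dom q -> pi (pi q) = q) &
      (forall q r, Dom q -> Dom r -> cle r q -> cle (pi r) (pi q))].

Definition sigm (Dom : cond -> Prop) (pi : cond -> cond) (U : B) : B :=
  mkB (fun q => forall r, cle r q -> Dom r -> inB U (pi r)).

Section Aut.
Variables (Dom : cond -> Prop) (pi : cond -> cond).
Hypothesis H : good_pi Dom pi.

Lemma sigm_gen U p : inB (sigm Dom pi U) p <-> (forall r, cle r p -> Dom r -> inB U (pi r)).
Proof.
case: H => Hd HD Hinv Hmon.
rewrite inB_mkB; split; last first.
  apply: reg_of_down => p0 q0 H0 Hq r Hr; apply: H0; exact: cle_trans Hr Hq.
move=> Hreg r Hr Dr; apply/inB_reg => t Ht.
have [t0 [Ht0 Dt0]] := Hd t.
have Hd0 : cle (pi t0) r by rewrite -(Hinv r Dr); apply: Hmon => //; [exact: HD| exact: cle_trans Ht0 Ht].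
have [r1 [Hr1 Xr1]] := Hreg (pi t0) (cle_trans Hd0 Hr).
have [r2 [Hr2 Dr2]] := Hd r1.
exists (pi r2); split; last by apply: Xr1.
apply: (@cle_trans _ t0) Ht0; rewrite -[X in cle _ X](Hinv t0 Dt0).
apply: Hmon => //; [exact: HD| exact: cle_trans Hr2 Hr1].
Qed.

Lemma sigm_char U q : Dom q -> (inB (sigm Dom pi U) q <-> inB U (pi q)).
Proof.
case: (H) => Hd HD Hinv Hmon Dq; rewrite sigm_gen; split.
- by move=> X; apply: X => //; exact: cle_refl.
- move=> Uq r Hr Dr; apply: inB_down Uq _; exact: Hmon.
Qed.

Lemma dense_eq (u v : B) : (forall q, Dom q -> (inB u q <-> inB v q)) -> u = v.
Proof.
case: (H) => Hd _ _ _ E; apply: eqB => p.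
suff S : forall u v : B, (forall q, Dom q -> inB u q -> inB v q) -> inB u p -> inB v p.
  by split; apply: S => q Dq; rewrite E.
move=> u' v' E' Hu; apply/inB_reg => q Hq.
have [r [Hr Dr]] := Hd q; exists r; split => //; apply: E' => //.
exact: inB_down Hu (cle_trans Hr Hq).
Qed.

Lemma sigm_inv U : sigm Dom pi (sigm Dom pi U) = U.
Proof.
case: (H) => Hd HD Hinv Hmon.
apply: dense_eq => q Dq; rewrite sigm_char // sigm_char ?Hinv //; exact: HD.
Qed.

Lemma sigm_meet U V : sigm Dom pi (meetB U V) = meetB (sigm Dom pi U) (sigm Dom pi V).
Proof. by apply: dense_eq => q Dq; rewrite inB_meet !sigm_char // inB_meet. Qed.

Lemma sigm_compl U : sigm Dom pi (complB U) = complB (sigm Dom pi U).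
Proof.
case: (H) => Hd HD Hinv Hmon.
apply: dense_eq => q Dq; rewrite sigm_char // !inB_compl; split.
- move=> Hc r Hr HU; have [r' [Hr' Dr']] := Hd r.
  have := inB_down HU Hr'; rewrite sigm_char // => HU'.
  apply: (Hc (pi r')) HU'; apply: Hmon => //; exact: cle_trans Hr' Hr.
- move=> Hc t Ht HU; have [t' [Ht' Dt']] := Hd t.
  apply: (Hc (pi t')).
    rewrite -(Hinv q Dq); apply: Hmon => //; [exact: HD| exact: cle_trans Ht' Ht].
  rewrite sigm_char ?Hinv //; [exact: inB_down HU Ht'| exact: HD].
Qed.

Lemma sigm_aut : is_aut (sigm Dom pi).
Proof.
split; first by exists (sigm Dom pi) => U; exact: sigm_inv.
split; [exact: sigm_meet| exact: sigm_compl].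
Qed.

Lemma sigm_top : sigm Dom pi topB = topB.
Proof. apply: dense_eq => q Dq; rewrite sigm_char //; split => _; exact: inB_top. Qed.

End Aut.

Fixpoint mk (n : nat) (u : nat -> bool) : cond :=
  match n with 0 => [fmap] | n'.+1 => (mk n' u).[n' <- u n'] end.

Lemma mkE n u k : (mk n u).[? k] = if k < n then Some (u k) else None.
Proof.
elim: n => [|n IH] /=; first by rewrite fnd_fmap0.
rewrite fnd_set IH; case: (ltngtP k n) => [H|H|->]; rewrite ?eqxx ?ltnSn //.
- by rewrite ltnS ltnW.
- by rewrite ltnS leqNgt H.
Qed.

Definition flip (X : nat -> bool) (q : cond) : cond :=
  [fmap k : domf q => xorb (q k) (X (val k))].

Lemma flipE X q k : (flip X q).[? k] = omap (fun v => xorb v (X k)) q.[? k].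
Proof.
case: (fndP q k) => kq.
- have kq' : k \in domf (flip X q) by [].
  rewrite (in_fnd kq') /=; congr Some; rewrite /flip /= ffunE /=; congr xorb; exact: eq_getf.
- by apply: not_fnd.
Qed.

Lemma cleP (r q : cond) : cle r q <-> forall k v, q.[? k] = Some v -> r.[? k] = Some v.
Proof. by []. Qed.

Lemma flip_cle X r q : cle r q -> cle (flip X r) (flip X q).
Proof. by move=> H k v; rewrite !flipE; case E: q.[? k] => [w|] //= [<-]; rewrite (H _ _ E). Qed.

Lemma flipK X q : flip X (flip X q) = q.
Proof. by apply/fmapP => k; rewrite !flipE; case: q.[? k] => //= v; case: v; case: (X k). Qed.

Lemma flip_flip X Y q : flip X (flip Y q) = flip (fun k => xorb (Y k) (X k)) q.
Proof. by apply/fmapP => k; rewrite !flipE; case: q.[? k] => //= v; case: v; case: (X k); case: (Y k). Qed.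

Lemma flip_ext (X Y : nat -> bool) (q : cond) : (forall k, q.[? k] <> None -> X k = Y k) -> flip X q = flip Y q.
Proof. by move=> H; apply/fmapP => k; rewrite !flipE; case E: q.[? k] => //= [v]; rewrite H ?E. Qed.

Lemma cle_mono (U : B) p q : inB U p -> cle q p -> inB U q.
Proof. exact: inB_down. Qed.

Lemma bound (q : cond) : exists M, forall k, q.[? k] <> None -> k < M.
Proof.
exists (\max_(k : domf q) (val k).+1) => k; case: fndP => // kq _.
by have := @leq_bigmax _ (fun k : domf q => (val k).+1) (Sub k kq : domf q).
Qed.

Definition pb (P : Prop) : bool := if excluded_middle_informative P then true else false.
Lemma pbP (P : Prop) : reflect P (pb P).
Proof. by rewrite /pb; case: excluded_middle_informative => H; constructor. Qed.

Definition restr (q : cond) (l : nat) : cond := mk l (fun k => odflt false q.[? k]).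
Definition notb (b : B) (p : cond) : Prop := forall r, cle r p -> ~ inB b r.
Definition decb (b : B) (q : cond) (l : nat) : Prop :=
  (forall k, k < l -> q.[? k] <> None) /\ (inB b (restr q l) \/ notb b (restr q l)).
Definition agree (q q' : cond) (l : nat) : Prop := forall k, k < l -> q.[? k] = q'.[? k].

Lemma restr_agree q q' l : agree q q' l -> restr q l = restr q' l.
Proof. by move=> H; apply/fmapP => k; rewrite !mkE; case: ifP => // /H ->. Qed.

Lemma decb_agree b q q' l : agree q q' l -> decb b q l -> decb b q' l.
Proof.
move=> H [H1 H2]; split; first by move=> k kl; rewrite -H //; exact: H1.
by rewrite -(restr_agree H).
Qed.

Lemma agree_le q q' l l' : l' <= l -> agree q q' l -> agree q q' l'.
Proof. by move=> Hl H k kl; apply: H; exact: leq_trans kl Hl. Qed.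

Lemma agree_sym q q' l : agree q q' l -> agree q' q l.
Proof. by move=> H k kl; rewrite H. Qed.

Lemma restr_cle (q : cond) l : (forall k, k < l -> q.[? k] <> None) -> cle q (restr q l).
Proof.
move=> H k v; rewrite mkE; case: ifP => // /H; case: q.[? k] => //= w _ [->] //.
Qed.

Definition ell (b : B) (q : cond) : nat :=
  match excluded_middle_informative (exists l, pb (decb b q l)) with
  | left H => ex_minn H
  | right _ => 0
  end.

Lemma ell_spec b q l : decb b q l ->
  [/\ decb b q (ell b q), ell b q <= l & forall l', l' < ell b q -> ~ decb b q l'].
Proof.
move=> Hl; rewrite /ell; case: excluded_middle_informative => [H|H]; last first.
  by exfalso; apply: H; exists l; apply/pbP.
case: ex_minnP => m /pbP Hm Hmin; split => //.
- by apply: Hmin; apply/pbP.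
- move=> l' Hl' Hd; have := Hmin l' (introT (pbP _) Hd); by rewrite leqNgt Hl'.
Qed.

Definition Dom (b : B) (q : cond) : Prop := exists l, decb b q l.

Lemma ell_agree b q q' : Dom b q -> agree q q' (ell b q) -> Dom b q' /\ ell b q' = ell b q.
Proof.
move=> [l Hl] Ha; have [H1 _ H3] := ell_spec Hl.
have H1' := decb_agree Ha H1.
split; first by exists (ell b q).
have [H4 H5 H6] := ell_spec H1'.
apply/eqP; rewrite eqn_leq H5 /=; rewrite leqNgt; apply/negP => Hlt.
apply: (H3 _ Hlt); apply: decb_agree H4; apply: agree_sym; exact: agree_le (ltnW Hlt) Ha.
Qed.

Lemma cle_agree b q r : Dom b q -> cle r q -> agree q r (ell b q).
Proof.
move=> [l Hl] Hr k kl; have [[H1 _] _ _] := ell_spec Hl.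
move: (H1 k kl); case E: q.[? k] => [v|] // _; by rewrite (Hr _ _ E).
Qed.

Lemma Dom_cle b q r : Dom b q -> cle r q -> Dom b r /\ ell b r = ell b q.
Proof. by move=> Dq Hr; apply: ell_agree Dq (cle_agree Dq Hr). Qed.

Definition piX (b : B) (X : nat -> bool) (q : cond) : cond :=
  flip (fun k => (ell b q <= k) && X k) q.

Lemma piX_agree b X q : agree q (piX b X q) (ell b q).
Proof. by move=> k kl; rewrite flipE; case: q.[? k] => //= v; rewrite leqNgt kl /=; case: v. Qed.

Lemma piX_Dom b X q : Dom b q -> Dom b (piX b X q) /\ ell b (piX b X q) = ell b q.
Proof. by move=> Dq; apply: ell_agree Dq (@piX_agree b X q). Qed.

Lemma Dom_dense b q : exists r, cle r q /\ Dom b r.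
Proof.
have [q1 [Hq1 Hd]] : exists q1, cle q1 q /\ (inB b q1 \/ notb b q1).
  case: (classic (exists r, cle r q /\ inB b r)) => [[r [Hr Hb]]|Hn].
  - by exists r; split => //; left.
  - exists q; split; first exact: cle_refl.
    by right => r Hr Hb; apply: Hn; exists r.
have [M HM] := bound q1.
pose q2 := mk M (fun k => odflt false q1.[? k]).
have H21 : cle q2 q1 by move=> k v E; rewrite mkE HM ?E //.
exists q2; split; first exact: cle_trans H21 Hq1.
exists M; split; first by move=> k kM; rewrite mkE kM.
have -> : restr q2 M = q2.
  by apply/fmapP => k; rewrite /restr /q2 !mkE; case: ifP => // kM; rewrite kM.
case: Hd => [Hb|Hn]; [left; exact: inB_down Hb H21| right => r Hr; apply: Hn; exact: cle_trans Hr H21].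
Qed.

Lemma piX_good b X : good_pi (Dom b) (piX b X).
Proof.
split.
- exact: Dom_dense.
- by move=> q Dq; case: (piX_Dom X Dq).
- move=> q Dq; have [_ E] := piX_Dom X Dq; by rewrite /piX E flipK.
- move=> q r Dq Dr Hr; have [_ E] := Dom_cle Dq Hr; rewrite /piX E; exact: flip_cle.
Qed.

Definition sigX (b : B) (X : nat -> bool) : B -> B := sigm (Dom b) (piX b X).

Lemma sigX_aut b X : is_aut (sigX b X).
Proof. exact: sigm_aut (piX_good b X). Qed.

Lemma sigX_top b X : sigX b X topB = topB.
Proof. exact: sigm_top (piX_good b X). Qed.

Lemma sigX_b b X : sigX b X b = b.
Proof.
apply: (dense_eq (piX_good b X)) => q Dq; rewrite (sigm_char (piX_good b X) _ Dq).
have [l Hl] := Dq; have [[H1 Hd] _ _] := ell_spec Hl.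
have Hq := restr_cle H1.
have Hp : cle (piX b X q) (restr q (ell b q)).
  rewrite (restr_agree (@piX_agree b X q)); apply: restr_cle => k kl.
  by rewrite -(@piX_agree b X q k kl); exact: H1.
case: Hd => [Hb|Hn].
- by split => _; [exact: inB_down Hb Hq| exact: inB_down Hb Hp].
- split => Hb; exfalso; [exact: Hn _ Hp Hb| exact: Hn _ Hq Hb].
Qed.

Section Claim.
Variables (Ix : Type) (nf : Ix -> ZF) (a : Ix -> B).

Definition Xs (i : Ix) (r : cond) : Prop := exists j, zeq (nf i) (nf j) /\ inB (a j) r.
Definition U (i : Ix) (p : cond) : Prop := reg (Xs i) p.
Definition notU (i : Ix) (p : cond) : Prop := forall q, cle q p -> ~ U i q.

Lemma notU_down i p q : notU i p -> cle q p -> notU i q.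
Proof. by move=> H Hq r Hr; apply: H; exact: cle_trans Hr Hq. Qed.

Lemma a_U i p : inB (a i) p -> U i p.
Proof.
move=> H; apply: reg_of_down; last by exists i; split => //; exact: zeq_refl.
by move=> p0 q0 [j [Hj Hp]] Hq; exists j; split => //; exact: inB_down Hp Hq.
Qed.

Lemma nnotU i p : ~ notU i p -> exists t, cle t p /\ Xs i t.
Proof.
move=> H; apply: NNPP => Hn; apply: H => q Hq HU.
have [t [Ht Xt]] := HU q (@cle_refl q); apply: Hn; exists t; split => //; exact: cle_trans Ht Hq.
Qed.

Lemma U_of i p : (forall t, cle t p -> ~ notU i t) -> U i p.
Proof.
move=> H t Ht; have [t' [Ht' Xt']] := nnotU (H t Ht); by exists t'.
Qed.

Lemma U_mono i k p : zeq (nf i) (nf k) -> U k p -> U i p.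
Proof.
move=> Hik; apply: reg_mono => r [l [Hkl Hr]]; exists l; split => //; exact: zeq_trans Hik Hkl.
Qed.

Definition claimP : Prop := forall qa qb, exists i s1 s2, cle s1 qa /\ cle s2 qb /\
  ((inB (a i) s1 /\ notU i s2) \/ (inB (a i) s2 /\ notU i s1)).

Lemma claim (f : Ix -> name) : (forall i, f i = check (nf i)) ->
  (forall m p, ~ inB (beq (Name f a) (check m)) p) -> claimP.
Proof.
move=> Hf Hx qa qb; apply: NNPP => Hn.
have Hdec : forall i, U i qa \/ notU i qa.
  move=> i; case: (classic (notU i qa)) => [H|H]; [by right| left].
  have [r [Hr [j [Hij Hj]]]] := nnotU H.
  have Hj' : ~ notU j qb.
    move=> HN; apply: Hn; exists j, r, qb; split => //; split; first exact: cle_refl.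
    by left.
  have [t [Ht [k [Hjk Hk]]]] := nnotU Hj'.
  apply: (U_mono (k := k)); first exact: zeq_trans Hij Hjk.
  apply: U_of => s Hs HN; apply: Hn; exists k, s, t; split => //; split => //; by right.
pose J := {i : Ix | U i qa}.
pose m := @zsup J (fun k => nf (proj1_sig k)).
apply: (Hx m qa).
cbn [check beq]; rewrite inB_meet !inB_inf; split.
- move=> w [i ->]; rewrite inB_imp => q Hq Haq.
  have HU : U i qa.
    case: (Hdec i) => // HN; exfalso; apply: (HN q Hq); exact: a_U.
  apply: (inB_sup_intro (v := meetB topB (beq (f i) (check (nf i))))).
    by exists (exist _ i HU).
  by rewrite inB_meet Hf beq_check; split; [exact: inB_top| exact: zeq_refl].
- move=> w [[j0 Hj0] ->]; rewrite inB_imp => q Hq _; rewrite inB_sup.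
  have := reg_down Hj0 Hq; apply: reg_mono => r [i [Hji Hr]].
  exists (meetB (a i) (beq (f i) (check (nf j0)))); split; first by exists i.
  by rewrite inB_meet Hf beq_check; split => //; exact: zeq_sym.
Qed.

Definition good (s : cond) (Y : nat -> bool) : Prop :=
  exists i, (inB (a i) s /\ notU i (flip Y s)) \/ (inB (a i) (flip Y s) /\ notU i s).

Lemma good_ext (s : cond) (Y Y' : nat -> bool) : (forall k, s.[? k] <> None -> Y k = Y' k) -> good s Y -> good s Y'.
Proof. by move=> H; rewrite /good (flip_ext H). Qed.

End Claim.

Section Blocks.
Variables (Ix : Type) (nf : Ix -> ZF) (a : Ix -> B).
Hypothesis Hc : claimP nf a.

Lemma step N L (G0 : nat -> bool) (u v : nat -> bool) : N <= L ->
  (forall k, G0 k -> N <= k < L) ->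
  exists L' (G1 : nat -> bool), [/\ L <= L', (forall k, k < L -> G1 k = G0 k),
    (forall k, G1 k -> N <= k < L') &
    exists s : cond, [/\ (forall k, s.[? k] <> None -> k < L'), cle s (mk N u) &
      good nf a s (fun k => if k < N then u k != v k else G1 k)]].
Proof.
move=> HNL HG0.
pose qa := mk L (fun k => if k < N then u k else false).
pose qb := mk L (fun k => if k < N then v k else G0 k).
have [i [s1 [s2 [H1 [H2 Hcase]]]]] := Hc qa qb.
have [M1 HM1] := bound s1; have [M2 HM2] := bound s2.
pose L' := maxn L (maxn M1 M2).
have HL1 : forall k, s1.[? k] <> None -> k < L'.
  by move=> k /HM1 Hk; rewrite /L' !leq_max Hk orbT.
have HL2 : forall k, s2.[? k] <> None -> k < L'.
  by move=> k /HM2 Hk; rewrite /L' !leq_max Hk !orbT.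
pose G1 := fun k => if k < L then G0 k else
   [&& s1.[? k] != None, s2.[? k] != None & s1.[? k] != s2.[? k]].
pose Y := fun k => if k < N then u k != v k else G1 k.
pose s := mk L' (fun k => match s1.[? k] with Some w => w | None =>
              match s2.[? k] with Some w => xorb w (Y k) | None => false end end).
have Hs1 : cle s s1.
  by move=> k w E; rewrite mkE HL1 ?E.
have Hs2 : cle (flip Y s) s2.
  move=> k w E; rewrite flipE mkE HL2 ?E //=.
  case E1 : s1.[? k] => [w1|] /=; last by case: (w); case: (Y k).
  congr Some; rewrite /Y /G1.
  case: (ltnP k L) => kL.
  - have := H1 k (if k < N then u k else false); rewrite E1 /qa mkE kL => /(_ erefl) [->].
    have := H2 k (if k < N then v k else G0 k); rewrite E /qb mkE kL => /(_ erefl) [->].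
    by case: (k < N); rewrite ?kL //; case: (u k); case: (v k).
  - rewrite ltnNge (leq_trans HNL kL) /= E1 E /=.
    by case: (w1); case: (w).
exists L', G1; split.
- by rewrite /L' leq_max leqnn.
- by move=> k kL; rewrite /G1 kL.
- move=> k; rewrite /G1; case: ifP => kL.
    by move/HG0 => /andP[-> kL']; apply: leq_trans kL' _; rewrite /L' leq_max leqnn.
  move=> /and3P[n1 _ _]; rewrite (HL1 k) ?andbT; last by apply/eqP.
  by apply: leq_trans HNL _; rewrite leqNgt kL.
- exists s; split.
  + by move=> k; rewrite mkE; case: ifP.
  + apply: cle_trans Hs1 (cle_trans H1 _) => k w; rewrite !mkE; case: ifP => // kN [<-].
    by rewrite (leq_trans kN HNL).
  + exists i; case: Hcase => [[Ha Hn]|[Ha Hn]].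
    * left; split; [exact: inB_down Ha Hs1| exact: notU_down Hn Hs2].
    * right; split; [exact: inB_down Ha Hs2| exact: notU_down Hn Hs1].
Qed.

Lemma batch N (reqs : seq (seq bool * seq bool)) :
  exists L (G : nat -> bool), [/\ N < L, (forall k, G k -> N <= k < L) &
    forall r, r \in reqs -> exists s : cond,
      [/\ (forall k, s.[? k] <> None -> k < L), cle s (mk N (nth false r.1)) &
          good nf a s (fun k => if k < N then nth false r.1 k != nth false r.2 k else G k)]].
Proof.
elim: reqs => [|r reqs [L [G [HNL HG Hr]]]].
  by exists N.+1, (fun _ => false); split.
have [L' [G1 [HL HG1 HG1' [s [Hs1 Hs2 Hs3]]]]] :=
  @step N L G (nth false r.1) (nth false r.2) (ltnW HNL) HG.
exists L', G1; split => //; first exact: leq_trans HNL HL.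
move=> r'; rewrite in_cons => /orP[/eqP ->|Hin]; first by exists s.
have [s' [Hs'1 Hs'2 Hs'3]] := Hr r' Hin.
exists s'; split => //.
- by move=> k /Hs'1 Hk; exact: leq_trans Hk HL.
- apply: good_ext Hs'3 => k /Hs'1 Hk; case: ifP => // _; by rewrite HG1.
Qed.

Fixpoint allseqs (n : nat) : seq (seq bool) :=
  if n is n'.+1 then [seq b :: t | b <- [:: true; false], t <- allseqs n'] else [:: [::]].

Lemma mem_allseqs (t : seq bool) : t \in allseqs (size t).
Proof.
elim: t => [|b t IH] //=.
by rewrite !mem_cat; case: b; rewrite (map_f _ IH) ?orbT.
Qed.

Lemma stage N : exists L (G : nat -> bool), [/\ N < L, (forall k, G k -> N <= k < L) &
  forall (q0 : cond) (P : nat -> bool), (forall k, q0.[? k] <> None -> k < N) ->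
    exists s : cond, [/\ (forall k, s.[? k] <> None -> k < L), cle s q0 &
      good nf a s (fun k => if k < N then P k else G k)]].
Proof.
have [L [G [HNL HG Hr]]] := batch N [seq (t1, t2) | t1 <- allseqs N, t2 <- allseqs N].
exists L, G; split => // q0 P Hq0.
pose u := mkseq (fun k => odflt false q0.[? k]) N.
pose v := mkseq (fun k => xorb (odflt false q0.[? k]) (P k)) N.
have Hin : (u, v) \in [seq (t1, t2) | t1 <- allseqs N, t2 <- allseqs N].
  apply: (allpairs_f pair).
  + by have := mem_allseqs u; rewrite size_mkseq.
  + by have := mem_allseqs v; rewrite size_mkseq.
have [s [Hs1 Hs2 Hs3]] := Hr _ Hin.
exists s; split => //.
- apply: cle_trans Hs2 _ => k w E; rewrite mkE.
  have kN : k < N by apply: Hq0; rewrite E.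
  by rewrite kN /u nth_mkseq // E.
- apply: good_ext Hs3 => k _ /=; case: ifP => // kN.
  by rewrite /u /v !nth_mkseq //; case: (odflt false q0.[? k]); case: (P k).
Qed.

End Blocks.

Lemma fsel_inf n M : exists m, M <= m /\ logn 2 m = n.
Proof.
exists (2 ^ n * M.*2.+1); split.
- rewrite -[M]mul1n; apply: leq_mul; first by rewrite expn_gt0.
  by rewrite mul1n -addnn; apply: leqW; exact: leq_addr.
- rewrite lognM ?expn_gt0 // pfactorK // logn_coprime ?addn0 //.
  by rewrite coprime2n /= odd_double.
Qed.

Lemma no_inj (g : (nat -> bool) -> nat) : injective g -> False.
Proof.
move=> Hg.
pose inv n := match excluded_middle_informative (exists al, g al = n) with
  | left H => proj1_sig (constructive_indefinite_description _ H)
  | right _ => fun _ => false end.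
have Hinv : forall al, inv (g al) = al.
  move=> al; rewrite /inv; case: excluded_middle_informative => [H|H].
  - case: constructive_indefinite_description => be /= Hb; exact: Hg Hb.
  - by exfalso; apply: H; exists al.
pose d n := ~~ inv n n.
have := congr1 (fun phi => phi (g d)) (Hinv d); rewrite /d /=.
by case: (inv (g d) (g d)).
Qed.

Section Blocks2.
Variables (Ix : Type) (nf : Ix -> ZF) (a : Ix -> B).
Hypothesis Hc : claimP nf a.

Definition stspec N (p : nat * (nat -> bool)) : Prop :=
  [/\ N < p.1, (forall k, p.2 k -> N <= k < p.1) &
  forall (q0 : cond) (P : nat -> bool), (forall k, q0.[? k] <> None -> k < N) ->
    exists s : cond, [/\ (forall k, s.[? k] <> None -> k < p.1), cle s q0 &
      good nf a s (fun k => if k < N then P k else p.2 k)]].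

Lemma blocks : exists (Nseq : nat -> nat) (Gm : nat -> nat -> bool),
  [/\ (forall m, Nseq m < Nseq m.+1), (forall m k, Gm m k -> Nseq m <= k < Nseq m.+1) &
  forall m (q0 : cond) (P : nat -> bool), (forall k, q0.[? k] <> None -> k < Nseq m) ->
    exists s : cond, [/\ (forall k, s.[? k] <> None -> k < Nseq m.+1), cle s q0 &
      good nf a s (fun k => if k < Nseq m then P k else Gm m k)]].
Proof.
have H' : forall N, exists p, stspec N p.
  move=> N; have [L [G [H1 H2 H3]]] := stage Hc N; by exists (L, G).
pose F N := proj1_sig (constructive_indefinite_description _ (H' N)).
have HF : forall N, stspec N (F N) by move=> N; rewrite /F; case: constructive_indefinite_description.
pose Nseq m := iter m (fun N => (F N).1) 0.
exists Nseq, (fun m => (F (Nseq m)).2).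
split.
- by move=> m; have [H1 _ _] := HF (Nseq m); exact: H1.
- by move=> m k; have [_ H2 _] := HF (Nseq m); exact: H2.
- by move=> m; have [_ _ H3] := HF (Nseq m); exact: H3.
Qed.
End Blocks2.

Section Sep.
Variables (Ix : Type) (nf : Ix -> ZF) (a : Ix -> B) (b : B).
Variables (Nseq : nat -> nat) (Gm : nat -> nat -> bool).
Hypothesis HN1 : forall m, Nseq m < Nseq m.+1.
Hypothesis HN2 : forall m k, Gm m k -> Nseq m <= k < Nseq m.+1.
Hypothesis HN3 : forall m (q0 : cond) (P : nat -> bool), (forall k, q0.[? k] <> None -> k < Nseq m) ->
    exists s : cond, [/\ (forall k, s.[? k] <> None -> k < Nseq m.+1), cle s q0 &
      good nf a s (fun k => if k < Nseq m then P k else Gm m k)].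

Definition Dal (al : nat -> bool) : nat -> bool :=
  fun k => pb (exists m, al (logn 2 m) /\ Gm m k).

Lemma Nseq_ge m : m <= Nseq m.
Proof. elim: m => [|m IH] //; exact: leq_ltn_trans IH (HN1 m). Qed.

Lemma Nseq_mono m d : Nseq m <= Nseq (m + d).
Proof. elim: d => [|d IH]; first by rewrite addn0. rewrite addnS; exact: leq_trans IH (ltnW (HN1 _)). Qed.

Lemma interval_uniq m m' k : Nseq m <= k < Nseq m.+1 -> Nseq m' <= k < Nseq m'.+1 -> m = m'.
Proof.
wlog: m m' / m <= m'.
  move=> W H1 H2; case: (leqP m m') => Hm; first exact: W.
  by apply/esym; apply: W => //; exact: ltnW.
move=> Hm /andP[H1 H2] /andP[H3 H4]; apply/eqP; rewrite eqn_leq Hm /= leqNgt; apply/negP => Hlt.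
have := Nseq_mono m.+1 (m' - m.+1); rewrite subnKC // => H5.
by have := leq_trans H5 H3; rewrite leqNgt H2.
Qed.

Lemma Dal_block al m k : Nseq m <= k < Nseq m.+1 -> Dal al k = al (logn 2 m) && Gm m k.
Proof.
move=> Hk; apply/pbP/idP.
- move=> [m' [H1 H2]]; have E := interval_uniq Hk (HN2 H2); subst m'; by rewrite H1.
- by move=> /andP[H1 H2]; exists m.
Qed.

Lemma sep al be n : al n != be n -> forall q, Dom b q ->
  exists r, [/\ cle r q, Dom b r & exists i,
    (inB (a i) (piX b (Dal al) r) /\ notU nf a i (piX b (Dal be) r)) \/
    (inB (a i) (piX b (Dal be) r) /\ notU nf a i (piX b (Dal al) r))].
Proof.
move=> Hn q Dq.
have [Mq HMq] := bound q.
have Hell : ell b q <= Mq.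
  have [l Hl] := Dq; have [[H1 _] _ _] := ell_spec Hl.
  rewrite leqNgt; apply/negP => H; have := HMq Mq (H1 Mq H); by rewrite ltnn.
have [m [Hm Hlog]] := fsel_inf n Mq.
have HmN : Mq <= Nseq m := leq_trans Hm (Nseq_ge m).
have [Dq0 Eq0] := piX_Dom (Dal al) Dq.
have Hq0 : forall k, (piX b (Dal al) q).[? k] <> None -> k < Nseq m.
  move=> k; rewrite /piX flipE; case E: q.[? k] => //= _; apply: leq_trans (HmN); apply: HMq; by rewrite E.
pose Xal k := (ell b q <= k) && Dal al k.
pose Xbe k := (ell b q <= k) && Dal be k.
have [s [Hs1 Hs2 Hs3]] := HN3 (fun k => xorb (Xal k) (Xbe k)) Hq0.
have [Ds Es] := Dom_cle Dq0 Hs2.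
case: (piX_good b (Dal al)) => _ HD Hinv Hmon.
have Dr : Dom b (piX b (Dal al) s) := HD s Ds.
have [_ Er] := piX_Dom (Dal al) Ds.
exists (piX b (Dal al) s); split => //.
- by have := Hmon _ s Dq0 Ds Hs2; rewrite Hinv.
have E1 : piX b (Dal al) (piX b (Dal al) s) = s := Hinv s Ds.
have E2 : piX b (Dal be) (piX b (Dal al) s) =
   flip (fun k => if k < Nseq m then xorb (Xal k) (Xbe k) else Gm m k) s.
  rewrite {1}/piX Er Es Eq0 /piX Es Eq0 flip_flip; apply: flip_ext => k /Hs1 Hk.
  case: ifP => // kN; rewrite /Xal /Xbe.
  have kN' : Nseq m <= k by rewrite leqNgt kN.
  have -> : ell b q <= k by apply: leq_trans Hell (leq_trans HmN kN').
  rewrite /= !(@Dal_block _ m) ?kN' ?Hk // Hlog.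
  by move: Hn; case: (al n); case: (be n); case: (Gm m k).
have [i Hi] := Hs3; exists i; rewrite E1 E2; exact: Hi.
Qed.

End Sep.

Theorem lemma5p5 (x : name) :
  forces topB (sub_checkV x) ->
  forces topB (complB (in_checkV x)) ->
  check_pairs x ->
  forall b : B, exists A : (B -> B) -> Prop,
    (forall s, A s -> is_aut s) /\ uncountable A /\
    (forall s t, A s -> A t -> s <> t ->
       s b = b /\ t b = b /\ forces b (complB (beq (act s x) (act t x)))).
Proof.
move=> _ H2 H3 b.
case: x H2 H3 => Ix f a H2 H3.
pose nf i := proj1_sig (constructive_indefinite_description _ (H3 i)).
have Hf : forall i, f i = check (nf i).
  by move=> i; rewrite /nf; case: constructive_indefinite_description.
have Hx : forall m p, ~ inB (beq (Name f a) (check m)) p.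
  move=> m p Hp; have := H2 p (@inB_top p); rewrite inB_compl => /(_ p (@cle_refl p)); apply.
  apply: (inB_sup_intro (v := beq (Name f a) (check m))) => //; by exists m.
have Hc := claim Hf Hx.
have [Nseq [Gm [HN1 HN2 HN3]]] := blocks Hc.
pose sig al := sigX b (Dal Gm al).
have Hsep := @sep Ix nf a b Nseq Gm HN1 HN2 HN3.
have Hneq : forall al be : nat -> bool, al <> be -> exists n, al n != be n.
  move=> al be H; apply: NNPP => Hn; apply: H; apply: functional_extensionality => n.
  by apply/eqP; apply: NNPP => Hne; apply: Hn; exists n; apply/negP.
have Hdist : forall al be, al <> be -> sig al <> sig be.
  move=> al be /Hneq [n Hn] E.
  have [q0 [_ Dq0]] := Dom_dense b [fmap].
  have [r [_ Dr [i Hi]]] := Hsep _ _ _ Hn q0 Dq0.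
  have Hg := piX_good b (Dal Gm al); have Hg' := piX_good b (Dal Gm be).
  case: Hi => [[Ha Hu]|[Ha Hu]].
  - have : inB (sig al (a i)) r by rewrite /sig /sigX (sigm_char Hg _ Dr).
    rewrite E /sig /sigX (sigm_char Hg' _ Dr) => Ha'; have HU := @a_U _ nf a _ _ Ha'.
    exact: Hu _ (@cle_refl _) HU.
  - have : inB (sig be (a i)) r by rewrite /sig /sigX (sigm_char Hg' _ Dr).
    rewrite -E /sig /sigX (sigm_char Hg _ Dr) => Ha'; have HU := @a_U _ nf a _ _ Ha'.
    exact: Hu _ (@cle_refl _) HU.
exists (fun s => exists al, s = sig al); split; last split.
- by move=> s [al ->]; exact: sigX_aut.
- move=> [h Hh].
  apply: (@no_inj (fun al => h (exist _ (sig al) (ex_intro _ al erefl)))).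
  move=> al be /Hh /(congr1 (@proj1_sig _ _)) /= E.
  by apply: NNPP => Hne; exact: Hdist _ _ Hne E.
- move=> s t [al ->] [be ->] Hst.
  split; first exact: sigX_b.
  split; first exact: sigX_b.
  have [n Hn] : exists n, al n != be n.
    by apply: Hneq => E; apply: Hst; rewrite E.
  move=> p _; rewrite inB_compl => q0 _ Hq.
  have [q [Hq1 Dq]] := Dom_dense b q0.
  have Hq' := inB_down Hq Hq1.
  have [r [Hr Dr [i Hi]]] := Hsep _ _ _ Hn q Dq.
  have Hg := piX_good b (Dal Gm al); have Hg' := piX_good b (Dal Gm be).
  have Htop1 : sig al topB = topB := sigX_top _ _.
  have Htop2 : sig be topB = topB := sigX_top _ _.
  move: Hq'; cbn [act beq]; rewrite inB_meet !inB_inf => -[Hb1 Hb2].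
  case: Hi => [[Ha Hu]|[Ha Hu]].
  + have Hsa : inB (sig al (a i)) r by rewrite /sig /sigX (sigm_char Hg _ Dr).
    have := Hb1 _ (ex_intro _ i erefl); rewrite inB_imp => /(_ r Hr Hsa).
    rewrite inB_sup => /(_ r (@cle_refl r)) [r1 [Hr1 [w [[j ->] Hw]]]].
    move: Hw; rewrite inB_meet !Hf !act_check // beq_check => -[Hw Hz].
    have [r2 [Hr2 Dr2]] := Dom_dense b r1.
    have := inB_down Hw Hr2; rewrite /sig /sigX (sigm_char Hg' _ Dr2) => Ha'; have HU := @a_U _ nf a _ _ Ha'.
    apply: (Hu (piX b (Dal Gm be) r2)).
      case: Hg' => _ _ _ Hm; apply: Hm => //; exact: cle_trans Hr2 Hr1.
    exact: U_mono Hz HU.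
  + have Hsa : inB (sig be (a i)) r by rewrite /sig /sigX (sigm_char Hg' _ Dr).
    have := Hb2 _ (ex_intro _ i erefl); rewrite inB_imp => /(_ r Hr Hsa).
    rewrite inB_sup => /(_ r (@cle_refl r)) [r1 [Hr1 [w [[j ->] Hw]]]].
    move: Hw; rewrite inB_meet !Hf !act_check // beq_check => -[Hw Hz].
    have [r2 [Hr2 Dr2]] := Dom_dense b r1.
    have := inB_down Hw Hr2; rewrite /sig /sigX (sigm_char Hg _ Dr2) => Ha'; have HU := @a_U _ nf a _ _ Ha'.
    apply: (Hu (piX b (Dal Gm al) r2)).
      case: Hg => _ _ _ Hm; apply: Hm => //; exact: cle_trans Hr2 Hr1.
    exact: U_mono (zeq_sym Hz) HU.
Qed.
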